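(* Let $c_0>0$, $T>0$, and let $(\hat u,\hat v)$ be a smooth solution of the NLDE on $\mathbb{R}\times[0,T]$ with $\mathcal{M}_0,\mathcal{M}<\infty$. There exist constants $\hat C_4,\hat C_5>0$, depending only on $c_0,\mathcal{M}_0,\mathcal{M},m,\alpha,\beta$, such that for every $\tau\in(0,1)$, every time-splitting solution with mesh $\tau$ whose initial data satisfy $\sum_j(|u_j^0|^2+|v_j^0|^2)\tau\le c_0$, all $j\in\mathbb{Z}$ and all integers $n\ge0$ with $(n+1)\tau\le T$, $$|\mathcal{U}_j^n(\tau)|^2\le|\mathcal{U}_j^n(0)|^2+\hat C_4\big(\tilde{\mathcal{L}}_j^n(0)+\tilde{\mathcal{D}}_j^n(0)\big)\tau+\hat C_5\mathcal{M}^2\tau^2,$$ $$|\mathcal{V}_{j+2}^n(\tau)|^2\le|\mathcal{V}_{j+2}^n(0)|^2+\hat C_4\big(\tilde{\mathcal{L}}_j^n(0)+\tilde{\mathcal{D}}_j^n(0)\big)\tau+\hat C_5\mathcal{M}^2\tau^2.$$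
   Context: Fix constants $m\ge 0$ and $\alpha,\beta\in\mathbb{R}$. The NLDE for $(u,v):\mathbb{R}\times[0,T]\to\mathbb{C}^2$ is $u_t+u_x=imv+i\alpha u|v|^2+2i\beta(\bar u v+u\bar v)v$, $v_t-v_x=imu+i\alpha v|u|^2+2i\beta(\bar u v+u\bar v)u$. Let (N) denote the ODE system on $\mathbb{C}^2$: $\frac{du}{ds}=imv+i\alpha u|v|^2+2i\beta(\bar u v+u\bar v)v$, $\frac{dv}{ds}=imu+i\alpha v|u|^2+2i\beta(\bar u v+u\bar v)u$. Time-splitting scheme with mesh $\tau>0$: given $(u_j^0,v_j^0)_{j\in\mathbb{Z}}\subset\mathbb{C}^2$ with $\sum_j(|u_j^0|^2+|v_j^0|^2)<\infty$, set $(u^{(\tau)},v^{(\tau)})(x,0)=(u_j^0,v_j^0)$ for $x\in[j\tau,(j+1)\tau)$. Inductively, once $(u^{(\tau)},v^{(\tau)})(\cdot,n\tau)$ is defined, set for $t\in[n\tau,(n+1)\tau)$: $u^{(\tau)}(x,t)=u^{(\tau)}(x-(t-n\tau),n\tau)$, $v^{(\tau)}(x,t)=v^{(\tau)}(x+(t-n\tau),n\tau)$; let $(u^{(\tau)},v^{(\tau)})(x,(n+1)\tau-)$ be the left limit in $t$; and for each $x$ define $(u^{(\tau)},v^{(\tau)})(x,(n+1)\tau)$ as the value at $s=\tau$ of the solution of (N) with value $(u^{(\tau)},v^{(\tau)})(x,(n+1)\tau-)$ at $s=0$ (this is globally well defined). Notation: $(u_j^n,v_j^n)=(u^{(\tau)},v^{(\tau)})(j\tau,n\tau)$,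 $(u_j^{n+1-},v_j^{n+1-})=(u^{(\tau)},v^{(\tau)})(j\tau,(n+1)\tau-)$; $(u_j^{n,2}(s),v_j^{n,2}(s))$, $s\in[0,\tau]$, is the solution of (N) with initial value $(u_j^{n+1-},v_j^{n+1-})$. Comparison quantities: $\mathcal{M}_0=\max_{\mathbb{R}\times[0,T]}(|\hat u|+|\hat v|+1)$, $\mathcal{M}=\max_{\mathbb{R}\times[0,T]}(|\hat u_t|+|\hat u_x|+|\hat v_t|+|\hat v_x|+1)$. For $s\in[0,\tau]$: $\mathcal{U}_j^n(s)=\hat u(j\tau+s,n\tau+s)-u_{j+1}^{n,2}(s)$, $\mathcal{V}_{j+2}^n(s)=\hat v((j+2)\tau-s,n\tau+s)-v_{j+1}^{n,2}(s)$, $\tilde{\mathcal{L}}_j^n(s)=|\mathcal{U}_j^n(s)|^2+|\mathcal{V}_{j+2}^n(s)|^2$, $\tilde{\mathcal{D}}_j^n(s)=|\mathcal{U}_j^n(s)|^2|v_{j+1}^{n,2}(s)|^2+|\mathcal{V}_{j+2}^n(s)|^2|u_{j+1}^{n,2}(s)|^2$. *)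

(* Defs.v *)
From Stdlib Require Import Reals ZArith List.
From Coquelicot Require Import Coquelicot.
Open Scope R_scope.

Definition NLu (m alpha beta : R) (u v : C) : C :=
  (Ci * RtoC m * v + Ci * RtoC alpha * u * RtoC (Cmod v ^ 2)
   + RtoC 2 * Ci * RtoC beta * (Cconj u * v + u * Cconj v) * v)%C.

Definition NLv (m alpha beta : R) (u v : C) : C :=
  (Ci * RtoC m * u + Ci * RtoC alpha * v * RtoC (Cmod u ^ 2)
   + RtoC 2 * Ci * RtoC beta * (Cconj u * v + u * Cconj v) * u)%C.

(* f : R -> R -> C (arguments x, t) is C^infinity on R^2: there is a family
   D l of functions, indexed by the list l of differentiation directions
   (false = d/dx, true = d/dt), with D nil = f, such that every D l is jointly
   continuous and its partial derivatives are D (false :: l) and D (true :: l). *)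
Definition smooth2 (f : R -> R -> C) : Prop :=
  exists D : list bool -> R -> R -> C,
    D nil = f /\
    forall (l : list bool) (x t : R),
      is_derive (fun y => D l y t) x (D (false :: l) x t) /\
      is_derive (fun s => D l x s) t (D (true :: l) x t) /\
      filterlim (fun p : R * R => D l (fst p) (snd p))
                (locally ((x, t) : R * R)) (locally (D l x t)).

Definition zsum (g : Z -> R) (N : nat) : R :=
  sum_f_R0 (fun k => g (Z.of_nat k - Z.of_nat N)%Z) (2 * N).

(* Main.v *)
Require Import Defs.
From Stdlib Require Import Reals ZArith List Lra Psatz.
From Coquelicot Require Import Coquelicot.
Open Scope R_scope.

Lemma Cmod2 (z : C) : Cmod z ^ 2 = fst z ^ 2 + snd z ^ 2.
Proof. unfold Cmod. rewrite pow2_sqrt; [ring| nra]. Qed.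

Ltac cdest := repeat match goal with z : C |- _ => destruct z end.

Lemma dot2_id m al be (a u v : C) :
  let U := (a - u)%C in let X := (NLu m al be a v - NLu m al be u v)%C in
  2 * (fst U * fst X + snd U * snd X) =
  -8 * be * (fst U * fst v + snd U * snd v) * (fst U * snd v - snd U * fst v).
Proof.
  cdest. unfold NLu. rewrite !Cmod2. simpl. ring.
Qed.

Lemma dot_le (z w : C) : fst z * fst w + snd z * snd w <= Cmod z * Cmod w.
Proof.
  rewrite <- (Cmod_conj z), <- Cmod_mult.
  eapply Rle_trans; [|apply re_le_Cmod].
  eapply Rle_trans; [|apply Rle_abs]. cdest. unfold Re; simpl. right; ring.
Qed.

Lemma X1_id m al be (a bt v : C) :
  (NLu m al be a bt - NLu m al be a v)%C =
  (Ci * RtoC m * (bt - v) + Ci * RtoC (al + 2*be) * a * RtoC (Cmod bt ^ 2 - Cmod v ^ 2)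
   + RtoC 2 * Ci * RtoC be * Cconj a * ((bt - v) * (bt + v)))%C.
Proof.
  cdest. unfold NLu. rewrite !Cmod2. apply injective_projections; simpl; ring_simplify; reflexivity.
Qed.

Lemma Cmod_RtoC r : Cmod (RtoC r) = Rabs r.
Proof. apply Cmod_R. Qed.

Lemma Cmod_sub_tri (x y : C) : Cmod x <= Cmod (x - y) + Cmod y.
Proof.
  replace x with ((x - y) + y)%C at 1 by (cdest; apply injective_projections; simpl; ring).
  apply Cmod_triangle.
Qed.

Lemma X1_bound m al be (a bt v : C) : 0 <= m ->
  Cmod (NLu m al be a bt - NLu m al be a v)%C <=
  Cmod (bt - v)%C * (m + (Rabs al + 4 * Rabs be) * Cmod a * (Cmod bt + Cmod v)).
Proof.
  intro Hm. rewrite X1_id.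
  set (d := Cmod (bt - v)%C).
  assert (Hd : 0 <= d) by apply Cmod_ge_0.
  assert (Ha := Cmod_ge_0 a). assert (Hb := Cmod_ge_0 bt). assert (Hv := Cmod_ge_0 v).
  assert (H1 : Rabs (Cmod bt ^ 2 - Cmod v ^ 2) <= d * (Cmod bt + Cmod v)).
  { replace (Cmod bt ^ 2 - Cmod v ^ 2) with ((Cmod bt - Cmod v) * (Cmod bt + Cmod v)) by ring.
    rewrite Rabs_mult. rewrite (Rabs_right (Cmod bt + Cmod v)) by lra.
    apply Rmult_le_compat_r; [lra|].
    assert (h1 := Cmod_sub_tri bt v). assert (h2 := Cmod_sub_tri v bt).
    replace (Cmod (v - bt)%C) with d in h2.
    2:{ unfold d. replace (v - bt)%C with (-(bt - v))%C by (cdest; apply injective_projections; simpl; ring).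
        rewrite Cmod_opp. reflexivity. }
    fold d in h1. apply Rabs_le; lra. }
  assert (H2 : Cmod ((bt - v) * (bt + v))%C <= d * (Cmod bt + Cmod v)).
  { rewrite Cmod_mult. apply Rmult_le_compat_l; [lra| apply Cmod_triangle]. }
  assert (Hab : Rabs (al + 2 * be) <= Rabs al + 2 * Rabs be).
  { eapply Rle_trans; [apply Rabs_triang|]. rewrite Rabs_mult, (Rabs_right 2) by lra. lra. }
  eapply Rle_trans; [apply Cmod_triangle|].
  eapply Rle_trans; [apply Rplus_le_compat; [apply Cmod_triangle| apply Rle_refl]|].
  rewrite !Cmod_mult, !Cmod_RtoC, Cmod_Ci, Cmod_conj.
  rewrite (Rabs_right m) by lra. rewrite (Rabs_right 2) by lra.
  fold d.
  assert (Hbe := Rabs_pos be). assert (Hal := Rabs_pos al).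
  assert (Hs : 0 <= Cmod bt + Cmod v) by lra.
  assert (Hp1 : Rabs (al + 2 * be) * Cmod a * Rabs (Cmod bt ^ 2 - Cmod v ^ 2)
               <= (Rabs al + 2 * Rabs be) * Cmod a * (d * (Cmod bt + Cmod v))).
  { apply Rmult_le_compat; try (apply Rmult_le_pos; auto using Rabs_pos); auto using Rabs_pos.
    apply Rmult_le_compat_r; auto. }
  assert (Hp2 : 2 * Rabs be * Cmod a * Cmod ((bt - v) * (bt + v))%C
               <= 2 * Rabs be * Cmod a * (d * (Cmod bt + Cmod v))).
  { apply Rmult_le_compat_l; [|exact H2]. apply Rmult_le_pos; lra. }
  assert (Ht := Cmod_triangle bt v).
  assert (Hq : 2 * 1 * Rabs be * Cmod a * (d * Cmod (bt + v)%C) <= 2 * Rabs be * Cmod a * (d * (Cmod bt + Cmod v))).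
  { rewrite Rmult_1_r. apply Rmult_le_compat_l; [nra| apply Rmult_le_compat_l; lra]. }
  nra.
Qed.

Lemma key_full m al be (a bt u v : C) : 0 <= m ->
  2 * (fst (a - u)%C * fst (NLu m al be a bt - NLu m al be u v)%C
       + snd (a - u)%C * snd (NLu m al be a bt - NLu m al be u v)%C)
  <= 4 * Rabs be * Cmod (a - u)%C ^ 2 * Cmod v ^ 2
     + 2 * Cmod (a - u)%C * (Cmod (bt - v)%C * (m + (Rabs al + 4 * Rabs be) * Cmod a * (Cmod bt + Cmod v))).
Proof.
  intro Hm.
  assert (E : forall X Y : C, fst (X - Y)%C = fst X - fst Y /\ snd (X - Y)%C = snd X - snd Y).
  { intros [] []; simpl; split; ring. }
  assert (Hs : 2 * (fst (a - u)%C * fst (NLu m al be a bt - NLu m al be u v)%C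
       + snd (a - u)%C * snd (NLu m al be a bt - NLu m al be u v)%C) =
     2 * (fst (a - u)%C * fst (NLu m al be a bt - NLu m al be a v)%C
       + snd (a - u)%C * snd (NLu m al be a bt - NLu m al be a v)%C) +
     2 * (fst (a - u)%C * fst (NLu m al be a v - NLu m al be u v)%C
       + snd (a - u)%C * snd (NLu m al be a v - NLu m al be u v)%C)).
  { destruct (E (NLu m al be a bt) (NLu m al be u v)) as [e1 e2].
    destruct (E (NLu m al be a bt) (NLu m al be a v)) as [e3 e4].
    destruct (E (NLu m al be a v) (NLu m al be u v)) as [e5 e6].
    rewrite e1, e2, e3, e4, e5, e6. ring. }
  rewrite Hs, dot2_id.
  assert (H1 := dot_le (a - u)%C (NLu m al be a bt - NLu m al be a v)%C).
  assert (H2 := X1_bound m al be a bt v Hm).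
  assert (H3 := Cmod_ge_0 (a - u)%C).
  assert (H4 : Cmod (a - u)%C * Cmod (NLu m al be a bt - NLu m al be a v)%C <=
     Cmod (a - u)%C * (Cmod (bt - v)%C * (m + (Rabs al + 4 * Rabs be) * Cmod a * (Cmod bt + Cmod v)))).
  { apply Rmult_le_compat_l; auto. }
  rewrite !Cmod2.
  set (U1 := fst (a - u)%C) in *. set (U2 := snd (a - u)%C) in *.
  set (v1 := fst v) in *. set (v2 := snd v) in *.
  assert (H5 : -8 * be * (U1 * v1 + U2 * v2) * (U1 * v2 - U2 * v1)
     <= 4 * Rabs be * (U1 ^ 2 + U2 ^ 2) * (v1 ^ 2 + v2 ^ 2)).
  { set (w1 := U1 * v1 + U2 * v2). set (w2 := U1 * v2 - U2 * v1).
    replace (4 * Rabs be * (U1 ^ 2 + U2 ^ 2) * (v1 ^ 2 + v2 ^ 2)) with (4 * Rabs be * (w1^2 + w2^2)) by (unfold w1, w2; ring).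
    assert (Ha : -8 * be * w1 * w2 <= 8 * Rabs be * (Rabs w1 * Rabs w2)).
    { eapply Rle_trans; [apply Rle_abs|]. rewrite !Rabs_mult. replace (Rabs (-8)) with 8 by (rewrite Rabs_left; lra). right; ring. }
    assert (Hb : 2 * (Rabs w1 * Rabs w2) <= w1^2 + w2^2).
    { rewrite <- (pow2_abs w1), <- (pow2_abs w2). assert (0 <= (Rabs w1 - Rabs w2)^2) by apply pow2_ge_0. nra. }
    assert (Hc := Rabs_pos be). clear - Ha Hb Hc. nra. }
  lra.
Qed.

Definition Acst (m al be M0 : R) : R :=
  2 * (m + (Rabs al + 4 * Rabs be) * M0 ^ 2 + (Rabs al + 4 * Rabs be) * M0 + 4 * Rabs be + 1).

Lemma deriv_bound m al be M0 (a bt b u v : C) (e : R) : 0 <= m ->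
  Cmod a <= M0 -> Cmod bt <= M0 -> Cmod (bt - b)%C <= e ->
  2 * (fst (a - u)%C * fst (NLu m al be a bt - NLu m al be u v)%C
       + snd (a - u)%C * snd (NLu m al be a bt - NLu m al be u v)%C)
  <= Acst m al be M0 * (Cmod (a - u)%C ^ 2 * Cmod v ^ 2 + Cmod (a - u)%C ^ 2 + Cmod (b - v)%C ^ 2)
     + Acst m al be M0 * e ^ 2.
Proof.
  intros Hm Ha Hbt He.
  eapply Rle_trans; [apply key_full; auto|].
  unfold Acst.
  set (c := Rabs al + 4 * Rabs be).
  assert (Hc : 0 <= c) by (unfold c; assert (h1 := Rabs_pos al); assert (h2 := Rabs_pos be); lra).
  assert (Hbe := Rabs_pos be).
  set (x := Cmod (a - u)%C). set (z := Cmod v). set (d := Cmod (bt - v)%C). set (y := Cmod (b - v)%C).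
  assert (Hx : 0 <= x) by apply Cmod_ge_0. assert (Hz : 0 <= z) by apply Cmod_ge_0.
  assert (Hd : 0 <= d) by apply Cmod_ge_0. assert (Hy : 0 <= y) by apply Cmod_ge_0.
  assert (Ha0 := Cmod_ge_0 a). assert (Hb0 := Cmod_ge_0 bt).
  assert (HM0 : 0 <= M0) by lra.
  assert (He0 : 0 <= e) by (assert (h := Cmod_ge_0 (bt - b)%C); lra).
  assert (Hdy : d <= e + y).
  { unfold d, y. replace (bt - v)%C with ((bt - b) + (b - v))%C
      by (cdest; apply injective_projections; simpl; ring).
    eapply Rle_trans; [apply Cmod_triangle|]. lra. }
  assert (H1 : c * Cmod a * (Cmod bt + z) <= c * M0 * (M0 + z)).
  { apply Rmult_le_compat; try nra; try (apply Rmult_le_compat_l; lra). }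
  assert (H2 : 2 * x * (d * (m + c * Cmod a * (Cmod bt + z)))
               <= 2 * x * (d * (m + c * M0 * (M0 + z)))).
  { apply Rmult_le_compat_l; [lra|]. apply Rmult_le_compat_l; lra. }
  assert (H3 : 2 * x * d * (m + c * M0 ^ 2) <= (m + c * M0 ^ 2) * (x ^ 2 + d ^ 2)).
  { assert (0 <= (x - d) ^ 2) by apply pow2_ge_0. assert (0 <= m + c * M0 ^ 2) by nra. nra. }
  assert (H4 : 2 * (x * z) * d * (c * M0) <= c * M0 * ((x * z) ^ 2 + d ^ 2)).
  { assert (0 <= (x * z - d) ^ 2) by apply pow2_ge_0. assert (0 <= c * M0) by nra. nra. }
  assert (H5 : d ^ 2 <= 2 * e ^ 2 + 2 * y ^ 2).
  { assert (0 <= (e - y) ^ 2) by apply pow2_ge_0. assert (d ^ 2 <= (e + y) ^ 2) by nra. nra. }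
  assert (E : 2 * x * (d * (m + c * M0 * (M0 + z))) =
              2 * x * d * (m + c * M0 ^ 2) + 2 * (x * z) * d * (c * M0)) by ring.
  assert (H6 : (m + c * M0 ^ 2 + c * M0) * d ^ 2 <= (m + c * M0 ^ 2 + c * M0) * (2 * e ^ 2 + 2 * y ^ 2)).
  { apply Rmult_le_compat_l; [nra| exact H5]. }
  assert (H7 : 0 <= (x * z) ^ 2) by apply pow2_ge_0.
  assert (H8 : 0 <= x ^ 2) by apply pow2_ge_0.
  assert (H9 : 0 <= y ^ 2) by apply pow2_ge_0.
  assert (H10 : 0 <= e ^ 2) by apply pow2_ge_0.
  assert (Hcm : 0 <= c * M0) by nra.
  assert (Hcm2 : 0 <= c * M0 ^ 2) by nra.
  replace (4 * Rabs be * x ^ 2 * z ^ 2) with (4 * Rabs be * (x * z) ^ 2) by ring.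
  replace (x ^ 2 * z ^ 2) with ((x * z) ^ 2) by ring.
  set (w := (x * z) ^ 2) in *. set (xx := x ^ 2) in *. set (yy := y ^ 2) in *. set (ee := e ^ 2) in *.
  set (dd := d ^ 2) in *.
  set (P1 := 2 * x * d * (m + c * M0 ^ 2)) in *. set (P2 := 2 * (x * z) * d * (c * M0)) in *.
  set (k1 := m + c * M0 ^ 2) in *. set (k2 := c * M0) in *.
  assert (Hk1 : 0 <= k1) by (unfold k1; lra).
  set (K := 2 * (k1 + k2 + 4 * Rabs be + 1)).
  assert (T1 : (4 * Rabs be + k2) * w <= K * w) by (apply Rmult_le_compat_r; [auto| unfold K, k1, k2 in *; lra]).
  assert (T2 : k1 * xx <= K * xx) by (apply Rmult_le_compat_r; [auto| unfold K, k1, k2 in *; lra]).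
  assert (T3 : (k1 + k2) * (2 * yy) <= K * yy) by (unfold K, k1, k2 in *; nra).
  assert (T4 : (k1 + k2) * (2 * ee) <= K * ee) by (unfold K, k1, k2 in *; nra).
  assert (T5 : k1 * dd + k2 * dd <= (k1 + k2) * (2 * ee + 2 * yy)) by (unfold k1, k2 in *; nra).
  rewrite E in H2. unfold K in *. clear -H2 H3 H4 H6 T1 T2 T3 T4 T5. lra.
Qed.

Lemma NLv_swap m al be (u v : C) : NLv m al be u v = NLu m al be v u.
Proof. cdest. unfold NLu, NLv. rewrite !Cmod2. apply injective_projections; simpl; ring_simplify; reflexivity. Qed.

Lemma cons_id m al be (u v : C) :
  fst u * fst (NLu m al be u v) + snd u * snd (NLu m al be u v)
  + (fst v * fst (NLv m al be u v) + snd v * snd (NLv m al be u v)) = 0.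
Proof. cdest. unfold NLu, NLv. rewrite !Cmod2. simpl. ring. Qed.

Lemma qid m al be (u v : C) :
  2 * (fst v * fst (NLv m al be u v) + snd v * snd (NLv m al be u v)) =
  2 * (m + 2 * be * (2 * (fst u * fst v + snd u * snd v))) * (snd v * fst u - fst v * snd u).
Proof. cdest. unfold NLu, NLv. rewrite !Cmod2. simpl. ring. Qed.

Lemma amgm_abs (m X Y I : R) : 0 <= m -> 0 <= X -> 0 <= Y -> m ^ 2 * I ^ 2 <= X * Y ->
  2 * m * I <= X + Y.
Proof.
  intros Hm HX HY H.
  assert (HmI : 2 * m * I <= 2 * (m * Rabs I)).
  { assert (I <= Rabs I) by apply Rle_abs. nra. }
  assert (HI2 : (m * Rabs I) ^ 2 <= X * Y).
  { replace ((m * Rabs I) ^ 2) with (m ^ 2 * Rabs I ^ 2) by ring. rewrite pow2_abs. exact H. }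
  assert (H0 : 0 <= m * Rabs I) by (assert (h := Rabs_pos I); nra).
  assert (0 <= (X - Y) ^ 2) by apply pow2_ge_0.
  destruct (Rle_dec (2 * (m * Rabs I)) (X + Y)); [lra|].
  exfalso. set (z := m * Rabs I) in *. nra.
Qed.

Lemma q_bound m al be (u v : C) tau : 0 < tau -> 0 <= m ->
  2 * (fst v * fst (NLv m al be u v) + snd v * snd (NLv m al be u v))
  <= Cmod v ^ 2 / tau + 8 * Rabs be * Cmod u ^ 2 * Cmod v ^ 2 + m ^ 2 * tau * Cmod u ^ 2.
Proof.
  intros Ht Hm. rewrite qid, !Cmod2.
  set (r := fst u * fst v + snd u * snd v). set (I := snd v * fst u - fst v * snd u).
  set (p := fst u ^ 2 + snd u ^ 2). set (q := fst v ^ 2 + snd v ^ 2).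
  assert (HL : r ^ 2 + I ^ 2 = p * q) by (unfold r, I, p, q; ring).
  assert (Hp : 0 <= p) by (unfold p; nra). assert (Hq : 0 <= q) by (unfold q; nra).
  assert (H1 : 2 * m * I <= q / tau + m ^ 2 * tau * p).
  { apply amgm_abs; auto.
    - apply Rmult_le_pos; auto. left; apply Rinv_0_lt_compat; auto.
    - apply Rmult_le_pos; [apply Rmult_le_pos|]; auto. apply pow2_ge_0. lra.
    - replace (q / tau * (m ^ 2 * tau * p)) with (m ^ 2 * (p * q)) by (field; lra).
      assert (0 <= r ^ 2) by apply pow2_ge_0. assert (0 <= m^2) by apply pow2_ge_0. nra. }
  assert (H2 : 8 * be * r * I <= 8 * Rabs be * p * q).
  { assert (Ha : 8 * be * r * I <= 8 * Rabs be * (Rabs r * Rabs I)).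
    { eapply Rle_trans; [apply Rle_abs|]. rewrite !Rabs_mult. rewrite (Rabs_right 8) by lra. right; ring. }
    assert (Hb : 2 * (Rabs r * Rabs I) <= r ^ 2 + I ^ 2).
    { rewrite <- (pow2_abs r), <- (pow2_abs I). assert (0 <= (Rabs r - Rabs I)^2) by apply pow2_ge_0. nra. }
    assert (Hc := Rabs_pos be). 
    assert (Hd : 0 <= Rabs be * (p * q)) by (apply Rmult_le_pos; nra).
    clear - Ha Hb Hc HL Hd. nra. }
  replace (2 * (m + 2 * be * (2 * r)) * I) with (2 * m * I + 8 * be * r * I) by ring.
  lra.
Qed.

Lemma mvt (phi dphi : R -> R) (a b : R) : a <= b ->
  (forall s, is_derive phi s (dphi s)) ->
  exists c, a <= c <= b /\ phi b - phi a = dphi c * (b - a).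
Proof.
  intros Hab Hd.
  destruct (MVT_gen phi a b dphi) as [c [Hc E]].
  - intros; apply Hd.
  - intros x _. apply derivable_continuous_pt. exists (dphi x). apply is_derive_Reals, Hd.
  - exists c. rewrite Rmin_left, Rmax_right in Hc by lra. auto.
Qed.

Lemma mvt_le (phi dphi : R -> R) (tau K : R) : 0 <= tau ->
  (forall s, is_derive phi s (dphi s)) ->
  (forall s, 0 <= s <= tau -> dphi s <= K) -> phi tau <= phi 0 + K * tau.
Proof.
  intros Ht Hd HK. destruct (mvt phi dphi 0 tau Ht Hd) as [c [Hc E]].
  rewrite Rminus_0_r in E.
  assert (dphi c * tau <= K * tau) by (apply Rmult_le_compat_r; [lra| apply HK; lra]).
  lra.
Qed.

Lemma const_deriv (phi dphi : R -> R) s : 0 <= s ->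
  (forall s, is_derive phi s (dphi s)) -> (forall s, dphi s = 0) -> phi s = phi 0.
Proof.
  intros Hs Hd H0. destruct (mvt phi dphi 0 s Hs Hd) as [c [Hc E]]. rewrite H0 in E. lra.
Qed.

Lemma gronwall (phi dphi : R -> R) (k h tau : R) : 0 <= k -> 0 <= h ->
  (forall s, is_derive phi s (dphi s)) ->
  (forall s, 0 <= s <= tau -> dphi s <= k * phi s + h) ->
  forall s, 0 <= s <= tau -> phi s <= exp (k * s) * (phi 0 + h * s).
Proof.
  intros Hk Hh Hd Hi s Hs.
  set (psi := fun s => exp (- k * s) * phi s - h * s).
  set (dpsi := fun s => - k * exp (- k * s) * phi s + exp (- k * s) * dphi s - h).
  assert (Hpd : forall s, is_derive psi s (dpsi s)).
  { intro x. unfold psi, dpsi.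
    assert (H1 : is_derive (fun s => exp (- k * s)) x (- k * exp (- k * x))).
    { auto_derive; [auto| ring]. }
    assert (H2 := is_derive_mult _ _ x _ _ H1 (Hd x) Rmult_comm).
    assert (H3 : is_derive (fun s : R => h * s) x h).
    { auto_derive; [auto| ring]. }
    assert (H4 := is_derive_minus _ _ x _ _ H2 H3).
    unfold minus, plus, opp, mult in H4; simpl in H4.
    replace (- k * exp (- k * x) * phi x + exp (- k * x) * dphi x - h)
      with (- k * exp (- k * x) * phi x + exp (- k * x) * dphi x + - h) by ring.
    eapply is_derive_ext; [|exact H4]. intro t; simpl. ring. }
  assert (Hle : psi s <= psi 0).
  { destruct (mvt psi dpsi 0 s (proj1 Hs) Hpd) as [c [Hc E]].
    rewrite Rminus_0_r in E.
    assert (Hc' : dpsi c <= 0).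
    { unfold dpsi. assert (Hic := Hi c ltac:(lra)).
      assert (He : 0 < exp (- k * c)) by apply exp_pos.
      assert (He1 : exp (- k * c) <= 1).
      { rewrite <- exp_0. destruct (Rle_lt_or_eq_dec _ _ (Rmult_le_pos k c Hk ltac:(lra))) as [hl|hl].
        - left; apply exp_increasing; lra.
        - right; f_equal; lra. }
      assert (exp (- k * c) * (dphi c - k * phi c) <= exp (- k * c) * h).
      { apply Rmult_le_compat_l; lra. }
      nra. }
    assert (dpsi c * s <= 0) by nra.
    lra. }
  unfold psi in Hle. rewrite Rmult_0_r, exp_0, Rmult_1_l, Rmult_0_r, Rminus_0_r in Hle.
  assert (Hx : exp (k * s) * exp (- k * s) = 1).
  { rewrite <- exp_plus. replace (k * s + - k * s) with 0 by ring. apply exp_0. }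
  assert (Hep : 0 < exp (k * s)) by apply exp_pos.
  assert (exp (k * s) * (exp (- k * s) * phi s) <= exp (k * s) * (phi 0 + h * s)).
  { apply Rmult_le_compat_l; lra. }
  rewrite <- Rmult_assoc, Hx, Rmult_1_l in H. exact H.
Qed.

Lemma exp_mono x y : x <= y -> exp x <= exp y.
Proof. intro H. destruct (Rle_lt_or_eq_dec _ _ H) as [h|h]; [left; apply exp_increasing; auto| subst; lra]. Qed.

Lemma is_derive_plusR (f g df dg : R -> R) : (forall s, is_derive f s (df s)) -> (forall s, is_derive g s (dg s)) ->
  forall s, is_derive (fun x => f x + g x) s (df s + dg s).
Proof. intros Hf Hg s. exact (is_derive_plus f g s _ _ (Hf s) (Hg s)). Qed.

Lemma mul_le_1 x t : 0 <= x -> t <= 1 -> x * t <= x.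
Proof. intros; nra. Qed.

Lemma pos3 x y z : 0 <= x -> 0 <= y -> 0 <= z -> 0 <= x * y * z.
Proof. intros. apply Rmult_le_pos; [apply Rmult_le_pos|]; auto. Qed.

Lemma chain (A B Kq m c0 : R) : 0 <= A -> 0 <= B -> 0 <= Kq -> 0 <= m -> 0 < c0 ->
  exists C4 C5, 0 < C4 /\ 0 < C5 /\
  forall tau N (F G P Q dF dG dQ : R -> R) W,
  0 < tau < 1 -> 0 <= N -> W * tau <= c0 ->
  (forall s, is_derive F s (dF s)) -> (forall s, is_derive G s (dG s)) -> (forall s, is_derive Q s (dQ s)) ->
  (forall s, 0 <= s <= tau -> 0 <= F s /\ 0 <= G s /\ 0 <= P s /\ 0 <= Q s /\ P s + Q s = W) ->
  (forall s, 0 <= s <= tau -> dF s <= A * (F s * Q s + F s + G s) + B * N) ->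
  (forall s, 0 <= s <= tau -> dG s <= A * (G s * P s + F s + G s) + B * N) ->
  (forall s, 0 <= s <= tau -> dQ s <= Q s / tau + Kq * W * Q s + m ^ 2 * tau * W) ->
  F tau <= F 0 + C4 * ((F 0 + G 0) + (F 0 * Q 0 + G 0 * P 0)) * tau + C5 * N.
Proof.
  intros HA HB HKq Hm Hc0.
  set (E1 := exp (A * (c0 + 2))). set (E2 := exp (A * c0)). set (E3 := exp (1 + Kq * c0)).
  assert (HE1 : 0 < E1) by apply exp_pos. assert (HE2 : 0 < E2) by apply exp_pos.
  assert (HE3 : 0 < E3) by apply exp_pos.
  set (b2 := 2 * A * B * E1 + B).
  assert (Hb2 : 0 <= b2) by (unfold b2; assert (0 <= A * B) by nra; nra).
  set (K := A * E2 * E3 * (1 + m ^ 2 * c0 + (c0 + m ^ 2 * c0) * (A * E1)) + A * E1).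
  set (K' := A * E2 * E3 * (c0 + m ^ 2 * c0) * b2 + b2).
  assert (Hm2 : 0 <= m ^ 2) by apply pow2_ge_0.
  assert (HAE : 0 <= A * E2 * E3) by (apply Rmult_le_pos; [apply Rmult_le_pos|]; lra).
  assert (HK : 0 <= K).
  { unfold K. assert (0 <= m ^ 2 * c0) by nra. assert (0 <= A * E1) by nra.
    assert (0 <= (c0 + m ^ 2 * c0) * (A * E1)) by nra. nra. }
  assert (HK' : 0 <= K').
  { unfold K'. assert (0 <= m ^ 2 * c0) by nra. assert (0 <= (c0 + m ^ 2 * c0) * b2) by nra. nra. }
  exists (K + 1), (K' + 1). split; [lra|]. split; [lra|].
  intros tau N F G P Q dF dG dQ W Ht HN HW HdF HdG HdQ Hpos HiF HiG HiQ.
  set (F0 := F 0). set (G0 := G 0). set (P0 := P 0). set (Q0 := Q 0).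
  assert (H0 : 0 <= 0 <= tau) by lra.
  destruct (Hpos 0 H0) as (HF0 & HG0 & HP0 & HQ0 & HW0). fold F0 G0 P0 Q0 in HF0, HG0, HP0, HQ0, HW0.
  assert (HWp : 0 <= W) by lra.
  assert (HWt : W * tau <= c0) by exact HW.
  assert (HL : forall s, 0 <= s <= tau -> F s + G s <= E1 * (F0 + G0 + 2 * B * N)).
  { intros s Hs.
    assert (Hg := gronwall (fun x => F x + G x) (fun x => dF x + dG x) (A * (W + 2)) (2 * B * N) tau
                    ltac:(nra) ltac:(nra) (is_derive_plusR _ _ _ _ HdF HdG)).
    assert (Hs' : forall s, 0 <= s <= tau ->
       dF s + dG s <= A * (W + 2) * (F s + G s) + 2 * B * N).
    { intros x Hx. destruct (Hpos x Hx) as (a1 & a2 & a3 & a4 & a5).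
      assert (h1 := HiF x Hx). assert (h2 := HiG x Hx).
      assert (F x * Q x <= F x * W) by (apply Rmult_le_compat_l; lra).
      assert (G x * P x <= G x * W) by (apply Rmult_le_compat_l; lra).
      assert (A * (F x * Q x + G x * P x) <= A * (F x * W + G x * W)) by (apply Rmult_le_compat_l; lra).
      nra. }
    specialize (Hg Hs' s Hs). simpl in Hg. fold F0 G0 in Hg.
    assert (He : exp (A * (W + 2) * s) <= E1).
    { apply exp_mono. assert (W * s <= c0) by nra.
      assert ((W + 2) * s <= c0 + 2) by nra. rewrite Rmult_assoc. apply Rmult_le_compat_l; lra. }
    assert (HBN : 0 <= B * N) by nra.
    assert (Hh : F0 + G0 + 2 * B * N * s <= F0 + G0 + 2 * B * N) by nra.
    eapply Rle_trans; [exact Hg|].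
    apply Rmult_le_compat; try lra; [left; apply exp_pos| nra]. }
  set (h2 := A * E1 * (F0 + G0) + b2 * N).
  assert (Hh2 : 0 <= h2).
  { unfold h2. assert (0 <= A * E1) by nra. assert (0 <= A * E1 * (F0 + G0)) by nra. nra. }
  assert (HFb : forall s, 0 <= s <= tau -> F s <= E2 * (F0 + h2 * tau)).
  { intros s Hs.
    assert (Hs' : forall s, 0 <= s <= tau -> dF s <= A * W * F s + h2).
    { intros x Hx. destruct (Hpos x Hx) as (a1 & a2 & a3 & a4 & a5).
      assert (h1 := HiF x Hx). assert (hl := HL x Hx).
      assert (F x * Q x <= F x * W) by (apply Rmult_le_compat_l; lra).
      assert (A * (F x * Q x) <= A * (F x * W)) by (apply Rmult_le_compat_l; lra).
      assert (A * (F x + G x) <= A * (E1 * (F0 + G0 + 2 * B * N))) by (apply Rmult_le_compat_l; lra).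
      unfold h2, b2. nra. }
    assert (Hg := gronwall F dF (A * W) h2 tau ltac:(nra) Hh2 HdF Hs' s Hs). fold F0 in Hg.
    assert (He : exp (A * W * s) <= E2).
    { apply exp_mono. assert (W * s <= c0) by nra. rewrite Rmult_assoc. apply Rmult_le_compat_l; lra. }
    assert (Hh : F0 + h2 * s <= F0 + h2 * tau) by nra.
    eapply Rle_trans; [exact Hg|].
    apply Rmult_le_compat; try lra; [left; apply exp_pos| nra]. }
  assert (HQb : forall s, 0 <= s <= tau -> Q s <= E3 * (Q0 + m ^ 2 * c0 * tau)).
  { intros s Hs.
    assert (Hs' : forall s, 0 <= s <= tau -> dQ s <= (/ tau + Kq * W) * Q s + m ^ 2 * tau * W).
    { intros x Hx. assert (h1 := HiQ x Hx). unfold Rdiv in h1. nra. }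
    assert (Hit : 0 < / tau) by (apply Rinv_0_lt_compat; lra).
    assert (Hk3 : 0 <= / tau + Kq * W) by (assert (0 <= Kq * W) by nra; lra).
    assert (Hh3 : 0 <= m ^ 2 * tau * W) by (apply Rmult_le_pos; [apply Rmult_le_pos|]; lra).
    assert (Hg := gronwall Q dQ (/ tau + Kq * W) (m ^ 2 * tau * W) tau Hk3 Hh3 HdQ Hs' s Hs).
    fold Q0 in Hg.
    assert (He : exp ((/ tau + Kq * W) * s) <= E3).
    { apply exp_mono. assert (W * s <= c0) by nra.
      assert (/ tau * s <= 1).
      { replace 1 with (/ tau * tau) by (field; lra). apply Rmult_le_compat_l; lra. }
      assert (Kq * W * s <= Kq * c0) by (rewrite Rmult_assoc; apply Rmult_le_compat_l; lra).
      nra. }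
    assert (Hh : Q0 + m ^ 2 * tau * W * s <= Q0 + m ^ 2 * c0 * tau).
    { assert (W * s <= c0) by nra.
      assert (m ^ 2 * tau * (W * s) <= m ^ 2 * tau * c0) by (apply Rmult_le_compat_l; nra).
      nra. }
    eapply Rle_trans; [exact Hg|].
    apply Rmult_le_compat; try lra; [left; apply exp_pos| nra]. }
  set (L0 := F0 + G0). set (D0 := F0 * Q0 + G0 * P0).
  assert (HD0 : 0 <= D0) by (unfold D0; nra).
  assert (HQ0W : Q0 <= W) by lra.
  assert (Hd4 : forall s, 0 <= s <= tau -> dF s <= K * (L0 + D0) + K' * N).
  { intros s Hs. destruct (Hpos s Hs) as (a1 & a2 & a3 & a4 & a5).
    assert (h1 := HiF s Hs). assert (hl := HL s Hs). assert (hf := HFb s Hs). assert (hq := HQb s Hs).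
    assert (HFQ : F s * Q s <= (E2 * (F0 + h2 * tau)) * (E3 * (Q0 + m ^ 2 * c0 * tau))).
    { apply Rmult_le_compat; lra. }
    assert (Hprod : (F0 + h2 * tau) * (Q0 + m ^ 2 * c0 * tau)
                    <= F0 * Q0 + m ^ 2 * c0 * F0 + (c0 + m ^ 2 * c0) * h2).
    { assert (e1 : F0 * (m ^ 2 * c0 * tau) <= m ^ 2 * c0 * F0).
      { replace (F0 * (m ^ 2 * c0 * tau)) with ((m ^ 2 * c0 * F0) * tau) by ring.
        apply mul_le_1; [apply pos3; lra| lra]. }
      assert (e2 : h2 * tau * Q0 <= c0 * h2).
      { assert (tau * Q0 <= c0).
        { assert (tau * Q0 <= tau * W) by (apply Rmult_le_compat_l; lra). nra. }
        replace (h2 * tau * Q0) with (h2 * (tau * Q0)) by ring. rewrite (Rmult_comm c0).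
        apply Rmult_le_compat_l; lra. }
      assert (e3 : h2 * tau * (m ^ 2 * c0 * tau) <= m ^ 2 * c0 * h2).
      { assert (0 <= m ^ 2 * c0 * h2) by (apply pos3; lra). assert (tau * tau <= 1) by nra.
        replace (h2 * tau * (m ^ 2 * c0 * tau)) with ((m ^ 2 * c0 * h2) * (tau * tau)) by ring.
        apply mul_le_1; lra. }
      replace ((F0 + h2 * tau) * (Q0 + m ^ 2 * c0 * tau)) with
        (F0 * Q0 + F0 * (m ^ 2 * c0 * tau) + h2 * tau * Q0 + h2 * tau * (m ^ 2 * c0 * tau)) by ring.
      lra. }
    assert (HAF : A * (F s * Q s) <= A * E2 * E3 * (F0 * Q0 + m ^ 2 * c0 * F0 + (c0 + m ^ 2 * c0) * h2)).
    { replace (A * E2 * E3 * (F0 * Q0 + m ^ 2 * c0 * F0 + (c0 + m ^ 2 * c0) * h2))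
        with (A * (E2 * E3 * (F0 * Q0 + m ^ 2 * c0 * F0 + (c0 + m ^ 2 * c0) * h2))) by ring.
      apply Rmult_le_compat_l; auto.
      eapply Rle_trans; [exact HFQ|].
      replace (E2 * (F0 + h2 * tau) * (E3 * (Q0 + m ^ 2 * c0 * tau)))
        with (E2 * E3 * ((F0 + h2 * tau) * (Q0 + m ^ 2 * c0 * tau))) by ring.
      apply Rmult_le_compat_l; [nra| exact Hprod]. }
    assert (HAL : A * (F s + G s) <= A * (E1 * (F0 + G0 + 2 * B * N))) by (apply Rmult_le_compat_l; lra).
    assert (Hsum : dF s <= A * E2 * E3 * (F0 * Q0 + m ^ 2 * c0 * F0 + (c0 + m ^ 2 * c0) * h2)
                          + A * (E1 * (F0 + G0 + 2 * B * N)) + B * N).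
    { nra. }
    eapply Rle_trans; [exact Hsum|].
    set (Z := A * E2 * E3) in *.
    set (Y := A * E1) in *.
    assert (HY : 0 <= Y) by (unfold Y; nra).
    assert (HFL : F0 <= L0 + D0) by (unfold L0; lra).
    assert (HQD : F0 * Q0 <= L0 + D0) by (unfold D0, L0; nra).
    assert (HLL : L0 <= L0 + D0) by lra.
    unfold h2. fold L0.
    replace (A * (E1 * (F0 + G0 + 2 * B * N))) with (Y * L0 + 2 * A * B * E1 * N) by (unfold Y, L0; ring).
    unfold K, K'. fold Z Y.
    assert (Hmc : 0 <= m ^ 2 * c0) by nra.
    assert (Hcm : 0 <= c0 + m ^ 2 * c0) by nra.
    assert (t1 : Z * (F0 * Q0) <= Z * (L0 + D0)) by (apply Rmult_le_compat_l; lra).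
    assert (t2 : Z * (m ^ 2 * c0 * F0) <= Z * (m ^ 2 * c0) * (L0 + D0)).
    { replace (Z * (m ^ 2 * c0) * (L0 + D0)) with (Z * (m ^ 2 * c0 * (L0 + D0))) by ring.
      apply Rmult_le_compat_l; [lra|]. apply Rmult_le_compat_l; lra. }
    assert (t3 : Z * ((c0 + m ^ 2 * c0) * (Y * L0)) <= Z * ((c0 + m ^ 2 * c0) * Y) * (L0 + D0)).
    { replace (Z * ((c0 + m ^ 2 * c0) * (Y * L0))) with (Z * ((c0 + m ^ 2 * c0) * Y) * L0) by ring.
      apply Rmult_le_compat_l; [|lra]. apply Rmult_le_pos; [lra|]. apply Rmult_le_pos; lra. }
    assert (t4 : Y * L0 <= Y * (L0 + D0)) by (apply Rmult_le_compat_l; lra).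
    unfold b2.
    match goal with |- ?l <= ?r =>
      assert (El : l = Z * (F0 * Q0) + Z * (m ^ 2 * c0 * F0) + Z * ((c0 + m ^ 2 * c0) * (Y * L0)) + Y * L0
            + (Z * (c0 + m ^ 2 * c0) * (2 * A * B * E1 + B) + (2 * A * B * E1 + B)) * N) by (unfold Y; ring);
      assert (Er : r = Z * (L0 + D0) + Z * (m ^ 2 * c0) * (L0 + D0) + Z * ((c0 + m ^ 2 * c0) * Y) * (L0 + D0)
            + Y * (L0 + D0) + (Z * (c0 + m ^ 2 * c0) * (2 * A * B * E1 + B) + (2 * A * B * E1 + B)) * N) by ring
    end.
    rewrite El, Er. lra. }
  assert (Hfin := mvt_le F dF tau (K * (L0 + D0) + K' * N) ltac:(lra) HdF Hd4).
  fold F0 in Hfin.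
  assert (HKN : 0 <= K' * N) by nra.
  assert (HLD : 0 <= L0 + D0) by (unfold L0; lra).
  assert (HKL : 0 <= K * (L0 + D0)) by nra.
  assert ((K * (L0 + D0) + K' * N) * tau <= (K + 1) * (L0 + D0) * tau + (K' + 1) * N).
  { assert (K' * N * tau <= K' * N) by nra. nra. }
  lra.
Qed.

Lemma is_derive_fst (f : R -> C) x (l : C) : is_derive f x l -> is_derive (fun y => fst (f y)) x (fst l).
Proof.
  intro H. unfold is_derive in *.
  apply (filterdiff_comp' f (fun z : C => fst z) x _ (fun z : C => fst z) H).
  apply filterdiff_linear. apply is_linear_fst.
Qed.

Lemma is_derive_snd (f : R -> C) x (l : C) : is_derive f x l -> is_derive (fun y => snd (f y)) x (snd l).
Proof.
  intro H. unfold is_derive in *.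
  apply (filterdiff_comp' f (fun z : C => snd z) x _ (fun z : C => snd z) H).
  apply filterdiff_linear. apply is_linear_snd.
Qed.

Lemma line_deriv (g gx gt : R -> R -> R) (x0 t0 sg s : R) :
  (forall x t, is_derive (fun y => g y t) x (gx x t)) ->
  (forall x t, is_derive (fun z => g x z) t (gt x t)) ->
  (forall x t, continuous (fun p : R * R => gx (fst p) (snd p)) (x, t)) ->
  is_derive (fun s => g (x0 + sg * s) (t0 + s)) s
     (gx (x0 + sg * s) (t0 + s) * sg + gt (x0 + sg * s) (t0 + s)).
Proof.
  intros Hx Ht Hc.
  assert (Hd : differentiable_pt_lim g (x0 + sg * s) (t0 + s) (gx (x0 + sg * s) (t0 + s)) (gt (x0 + sg * s) (t0 + s))).
  { apply filterdiff_differentiable_pt_lim.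
    eapply filterdiff_ext_lin.
    - apply (is_derive_filterdiff g (x0 + sg * s) (t0 + s) gx).
      + apply filter_forall. intro p. apply Hx.
      + apply Ht.
      + apply Hc.
    - intros [p1 p2]. simpl. unfold plus, scal; simpl. unfold mult; simpl. ring. }
  apply is_derive_Reals.
  replace (gx (x0 + sg * s) (t0 + s) * sg + gt (x0 + sg * s) (t0 + s))
    with (gx (x0 + sg * s) (t0 + s) * sg + gt (x0 + sg * s) (t0 + s) * 1) by ring.
  apply (derivable_pt_lim_comp_2d g (fun s => x0 + sg * s) (fun s => t0 + s)).
  - exact Hd.
  - apply is_derive_Reals. auto_derive; [auto| ring].
  - apply is_derive_Reals. auto_derive; [auto| ring].
Qed.

Lemma smooth_cont (uh uh_x : R -> R -> C) : smooth2 uh ->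
  (forall x t, is_derive (fun y => uh y t) x (uh_x x t)) ->
  forall x t, continuous (fun p : R * R => fst (uh_x (fst p) (snd p))) (x, t) /\
              continuous (fun p : R * R => snd (uh_x (fst p) (snd p))) (x, t).
Proof.
  intros [D [HD0 HD]] Hx.
  assert (Eq : forall x t, uh_x x t = D (false :: nil) x t).
  { intros x t. destruct (HD nil x t) as [H1 _]. rewrite HD0 in H1.
    assert (a1 := is_derive_unique _ _ _ (is_derive_fst _ _ _ H1)).
    assert (a2 := is_derive_unique _ _ _ (is_derive_fst _ _ _ (Hx x t))).
    assert (b1 := is_derive_unique _ _ _ (is_derive_snd _ _ _ H1)).
    assert (b2 := is_derive_unique _ _ _ (is_derive_snd _ _ _ (Hx x t))).
    apply injective_projections; congruence. }
  intros x t. destruct (HD (false :: nil) x t) as [_ [_ Hc]].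
  split.
  - unfold continuous. simpl.
    eapply filterlim_ext. { intro p. rewrite Eq. reflexivity. }
    rewrite Eq.
    eapply filterlim_comp; [exact Hc|].
    rewrite (surjective_pairing (D (false :: nil) x t)). apply continuous_fst.
  - unfold continuous. simpl.
    eapply filterlim_ext. { intro p. rewrite Eq. reflexivity. }
    rewrite Eq.
    eapply filterlim_comp; [exact Hc|].
    rewrite (surjective_pairing (D (false :: nil) x t)). apply continuous_snd.
Qed.

Lemma lip_comp (phi dphi : R -> R) M a b : (forall s, is_derive phi s (dphi s)) ->
  (forall s, Rabs (dphi s) <= M) -> (phi b - phi a) ^ 2 <= M ^ 2 * (b - a) ^ 2.
Proof.
  intros Hd HM.
  assert (Hgen : forall a b, a <= b -> (phi b - phi a) ^ 2 <= M ^ 2 * (b - a) ^ 2).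
  { intros a' b' Hab. destruct (mvt phi dphi a' b' Hab Hd) as [c [_ E]]. rewrite E.
    rewrite Rpow_mult_distr. apply Rmult_le_compat_r; [apply pow2_ge_0|].
    rewrite <- (pow2_abs (dphi c)). assert (h := HM c). assert (h0 := Rabs_pos (dphi c)).
    apply pow_incr; lra. }
  destruct (Rle_dec a b) as [h|h]; [auto|].
  replace ((phi b - phi a) ^ 2) with ((phi a - phi b) ^ 2) by ring.
  replace ((b - a) ^ 2) with ((a - b) ^ 2) by ring. apply Hgen; lra.
Qed.

Lemma im_le_Cmod (z : C) : Rabs (snd z) <= Cmod z.
Proof. eapply Rle_trans; [apply Rmax_r| apply Rmax_Cmod]. Qed.

Lemma lip_C (g dg : R -> C) M a b : (forall s, is_derive g s (dg s)) ->
  (forall s, Cmod (dg s) <= M) -> Cmod (g b - g a)%C ^ 2 <= 2 * M ^ 2 * (b - a) ^ 2.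
Proof.
  intros Hd HM. rewrite Cmod2.
  assert (h1 := lip_comp (fun s => fst (g s)) (fun s => fst (dg s)) M a b
                 (fun s => is_derive_fst _ _ _ (Hd s))
                 (fun s => Rle_trans _ _ _ (re_le_Cmod (dg s)) (HM s))).
  assert (h2 := lip_comp (fun s => snd (g s)) (fun s => snd (dg s)) M a b
                 (fun s => is_derive_snd _ _ _ (Hd s))
                 (fun s => Rle_trans _ _ _ (im_le_Cmod (dg s)) (HM s))).
  simpl in *.
  replace (fst (g b - g a)%C) with (fst (g b) - fst (g a)) by (simpl; ring).
  replace (snd (g b - g a)%C) with (snd (g b) - snd (g a)) by (simpl; ring).
  lra.
Qed.

Fixpoint sw (g : Z -> R) (a : Z) (len : nat) : R :=
  match len with O => 0 | S l => g a + sw g (a + 1)%Z l end.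

Lemma sw_nonneg g a l : (forall k, 0 <= g k) -> 0 <= sw g a l.
Proof. intro H. revert a. induction l; intro a; simpl; [lra|]. specialize (H a). specialize (IHl (a+1)%Z). lra. Qed.

Lemma sw_split g a k l : sw g a (k + l) = sw g a k + sw g (a + Z.of_nat k)%Z l.
Proof.
  revert a. induction k; intro a; simpl.
  - rewrite Z.add_0_r. ring.
  - rewrite IHk. replace (a + 1 + Z.of_nat k)%Z with (a + Z.pos (Pos.of_succ_nat k))%Z by lia. ring.
Qed.

Lemma sw_ext g h a l : (forall k, g k = h k) -> sw g a l = sw h a l.
Proof. intro H. revert a. induction l; intro a; simpl; auto. rewrite H, IHl. auto. Qed.

Lemma sw_plus g h a l : sw (fun k => g k + h k) a l = sw g a l + sw h a l.
Proof. revert a. induction l; intro a; simpl; [ring|]. rewrite IHl. ring. Qed.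

Lemma sw_scal g c a l : sw (fun k => g k * c) a l = sw g a l * c.
Proof. revert a. induction l; intro a; simpl; [ring|]. rewrite IHl. ring. Qed.

Lemma sw_shift g d a l : sw (fun k => g (k + d)%Z) a l = sw g (a + d)%Z l.
Proof. revert a. induction l; intro a; simpl; auto. rewrite IHl. f_equal. f_equal. lia. Qed.

Lemma sw_sub g a b l L : (forall k, 0 <= g k) -> (a <= b)%Z -> (b + Z.of_nat l <= a + Z.of_nat L)%Z ->
  sw g b l <= sw g a L.
Proof.
  intros Hg H1 H2.
  set (k := Z.to_nat (b - a)). set (r := (L - k - l)%nat).
  replace L with (k + (l + r))%nat by (unfold r, k; lia).
  rewrite sw_split, sw_split.
  replace (a + Z.of_nat k)%Z with b by (unfold k; lia).
  assert (0 <= sw g a k) by (apply sw_nonneg; auto).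
  assert (0 <= sw g (b + Z.of_nat l)%Z r) by (apply sw_nonneg; auto).
  lra.
Qed.

Lemma sum_sw g c n : sum_f_R0 (fun k => g (Z.of_nat k - c)%Z) n = sw g (- c)%Z (S n).
Proof.
  induction n.
  - simpl. replace (0 - c)%Z with (- c)%Z by lia. ring.
  - replace (sum_f_R0 _ (S n)) with (sum_f_R0 (fun k => g (Z.of_nat k - c)%Z) n + g (Z.of_nat (S n) - c)%Z) by reflexivity.
    rewrite IHn.
    replace (S (S n)) with (S n + 1)%nat by lia. rewrite sw_split.
    assert (E1 : forall x, sw g x 1 = g x) by (intro; simpl; ring). rewrite E1.
    f_equal. f_equal. lia.
Qed.

Lemma mass_bound (u v : nat -> Z -> C) (u0 v0 : Z -> C) tau c0 :
  (forall j, u 0%nat j = u0 j /\ v 0%nat j = v0 j) ->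
  (forall n k, Cmod (u (S n) k) ^ 2 + Cmod (v (S n) k) ^ 2
               = Cmod (u n (k - 1)%Z) ^ 2 + Cmod (v n (k + 1)%Z) ^ 2) ->
  (forall N : nat, zsum (fun j => (Cmod (u0 j) ^ 2 + Cmod (v0 j) ^ 2) * tau) N <= c0) ->
  0 < tau ->
  forall n j, (Cmod (u n j) ^ 2 + Cmod (v n (j + 2)%Z) ^ 2) * tau <= c0.
Proof.
  intros H0 Hs Hz Ht.
  set (mass := fun n k => Cmod (u n k) ^ 2 + Cmod (v n k) ^ 2).
  assert (Hm : forall n k, 0 <= mass n k).
  { intros. unfold mass. assert (0 <= Cmod (u n k) ^ 2) by apply pow2_ge_0.
    assert (0 <= Cmod (v n k) ^ 2) by apply pow2_ge_0. lra. }
  assert (Hstep : forall n a l, sw (mass (S n)) a l <= sw (mass n) (a - 1)%Z (l + 2)).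
  { intros n a l.
    set (gu := fun k => Cmod (u n k) ^ 2). set (gv := fun k => Cmod (v n k) ^ 2).
    assert (Hgu : forall k, 0 <= gu k) by (intro; apply pow2_ge_0).
    assert (Hgv : forall k, 0 <= gv k) by (intro; apply pow2_ge_0).
    rewrite (sw_ext _ (fun k => gu (k + -1)%Z + gv (k + 1)%Z)).
    2:{ intro k. unfold mass, gu, gv. rewrite Hs. replace (k + -1)%Z with (k - 1)%Z by lia. auto. }
    rewrite sw_plus, sw_shift, sw_shift.
    rewrite (sw_ext (mass n) (fun k => gu k + gv k)) by (intro; unfold mass, gu, gv; auto).
    rewrite sw_plus.
    assert (sw gu (a + -1)%Z l <= sw gu (a - 1)%Z (l + 2)) by (apply sw_sub; auto; lia).
    assert (sw gv (a + 1)%Z l <= sw gv (a - 1)%Z (l + 2)) by (apply sw_sub; auto; lia).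
    lra. }
  assert (Hind : forall n a l, sw (mass n) a l <= sw (mass 0%nat) (a - Z.of_nat n)%Z (l + 2 * n)).
  { induction n; intros a l.
    - simpl. replace (a - 0)%Z with a by lia. replace (l + 0)%nat with l by lia. lra.
    - eapply Rle_trans; [apply Hstep|]. eapply Rle_trans; [apply IHn|].
      replace (a - 1 - Z.of_nat n)%Z with (a - Z.of_nat (S n))%Z by lia.
      replace (l + 2 + 2 * n)%nat with (l + 2 * S n)%nat by lia. lra. }
  intros n j.
  assert (HW : Cmod (u n j) ^ 2 + Cmod (v n (j + 2)%Z) ^ 2 <= sw (mass n) j 3).
  { simpl. unfold mass. replace (j + 1 + 1)%Z with (j + 2)%Z by lia.
    assert (0 <= Cmod (v n j) ^ 2) by apply pow2_ge_0.
    assert (0 <= Cmod (u n (j + 2)%Z) ^ 2) by apply pow2_ge_0.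
    assert (0 <= mass n (j + 1)%Z) by auto. unfold mass in *. lra. }
  set (N := (Z.to_nat (Z.abs j) + n + 3)%nat).
  assert (HN : sw (mass 0%nat) (j - Z.of_nat n)%Z (3 + 2 * n) <= sw (mass 0%nat) (- Z.of_nat N)%Z (S (2 * N))).
  { apply sw_sub; auto; unfold N; lia. }
  assert (Hzs := Hz N). unfold zsum in Hzs.
  rewrite (sum_sw (fun j => (Cmod (u0 j) ^ 2 + Cmod (v0 j) ^ 2) * tau)) in Hzs.
  rewrite sw_scal in Hzs.
  assert (Hi := Hind n j 3%nat).
  assert (Em : forall a l, sw (mass 0%nat) a l = sw (fun j => Cmod (u0 j) ^ 2 + Cmod (v0 j) ^ 2) a l).
  { intros. apply sw_ext. intro k. unfold mass. destruct (H0 k) as [-> ->]. auto. }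
  rewrite !Em in HN. rewrite Em in Hi.
  apply Rmult_le_compat_r with (r := tau) in HW; [|lra].
  apply Rmult_le_compat_r with (r := tau) in Hi; [|lra].
  apply Rmult_le_compat_r with (r := tau) in HN; [|lra].
  lra.
Qed.

Lemma nsq_deriv (f : R -> C) s (l : C) : is_derive f s l ->
  is_derive (fun x => Cmod (f x) ^ 2) s (2 * (fst (f s) * fst l + snd (f s) * snd l)).
Proof.
  intro H.
  assert (H1 := is_derive_fst _ _ _ H). assert (H2 := is_derive_snd _ _ _ H).
  assert (M1 := is_derive_mult _ _ s _ _ H1 H1 Rmult_comm).
  assert (M2 := is_derive_mult _ _ s _ _ H2 H2 Rmult_comm).
  assert (P := is_derive_plus _ _ s _ _ M1 M2).
  unfold plus, mult in P; simpl in P.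
  replace (2 * (fst (f s) * fst l + snd (f s) * snd l)) with
    (fst l * fst (f s) + fst (f s) * fst l + (snd l * snd (f s) + snd (f s) * snd l)) by ring.
  eapply is_derive_ext; [|exact P]. intro x. rewrite Cmod2. simpl. ring.
Qed.

Lemma conservation m al be (U V : R -> C) :
  (forall s, is_derive U s (NLu m al be (U s) (V s)) /\ is_derive V s (NLv m al be (U s) (V s))) ->
  forall s, 0 <= s -> Cmod (U s) ^ 2 + Cmod (V s) ^ 2 = Cmod (U 0) ^ 2 + Cmod (V 0) ^ 2.
Proof.
  intros H s Hs.
  apply (const_deriv (fun x => Cmod (U x) ^ 2 + Cmod (V x) ^ 2)
    (fun x => 2 * (fst (U x) * fst (NLu m al be (U x) (V x)) + snd (U x) * snd (NLu m al be (U x) (V x)))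
            + 2 * (fst (V x) * fst (NLv m al be (U x) (V x)) + snd (V x) * snd (NLv m al be (U x) (V x))))); auto.
  - intro x. destruct (H x) as [h1 h2].
    exact (is_derive_plus _ _ x _ _ (nsq_deriv _ _ _ h1) (nsq_deriv _ _ _ h2)).
  - intro x. assert (E := cons_id m al be (U x) (V x)). lra.
Qed.

Lemma F_deriv (f : R -> C) s l1 l2 :
  is_derive (fun x => fst (f x)) s l1 -> is_derive (fun x => snd (f x)) s l2 ->
  is_derive (fun x => Cmod (f x) ^ 2) s (2 * (fst (f s) * l1 + snd (f s) * l2)).
Proof.
  intros H1 H2.
  assert (M1 := is_derive_mult _ _ s _ _ H1 H1 Rmult_comm).
  assert (M2 := is_derive_mult _ _ s _ _ H2 H2 Rmult_comm).
  assert (P := is_derive_plus _ _ s _ _ M1 M2).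
  unfold plus, mult in P; simpl in P.
  replace (2 * (fst (f s) * l1 + snd (f s) * l2)) with
    (l1 * fst (f s) + fst (f s) * l1 + (l2 * snd (f s) + snd (f s) * l2)) by ring.
  eapply is_derive_ext; [|exact P]. intro x. rewrite Cmod2. simpl. ring.
Qed.

Lemma char_deriv (uh uh_x uh_t : R -> R -> C) x0 t0 sg s : smooth2 uh ->
  (forall x t, is_derive (fun s => uh x s) t (uh_t x t)) ->
  (forall x t, is_derive (fun y => uh y t) x (uh_x x t)) ->
  is_derive (fun s => fst (uh (x0 + sg * s) (t0 + s))) s
     (fst (uh_x (x0 + sg * s) (t0 + s)) * sg + fst (uh_t (x0 + sg * s) (t0 + s))) /\
  is_derive (fun s => snd (uh (x0 + sg * s) (t0 + s))) s
     (snd (uh_x (x0 + sg * s) (t0 + s)) * sg + snd (uh_t (x0 + sg * s) (t0 + s))).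
Proof.
  intros Hs Ht Hx.
  assert (Hc := smooth_cont uh uh_x Hs Hx).
  split.
  - apply (line_deriv (fun x t => fst (uh x t)) (fun x t => fst (uh_x x t)) (fun x t => fst (uh_t x t))).
    + intros. apply (is_derive_fst (fun y => uh y t)). auto.
    + intros. apply (is_derive_fst (fun z => uh x z)). auto.
    + intros. apply Hc.
  - apply (line_deriv (fun x t => snd (uh x t)) (fun x t => snd (uh_x x t)) (fun x t => snd (uh_t x t))).
    + intros. apply (is_derive_snd (fun y => uh y t)). auto.
    + intros. apply (is_derive_snd (fun z => uh x z)). auto.
    + intros. apply Hc.
Qed.

Lemma diff_deriv (uh uh_x uh_t : R -> R -> C) (x0 t0 sg : R) (w : R -> C) (dw : R -> C) (s : R) : smooth2 uh ->
  (forall x t, is_derive (fun s => uh x s) t (uh_t x t)) ->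
  (forall x t, is_derive (fun y => uh y t) x (uh_x x t)) ->
  (forall s, is_derive w s (dw s)) ->
  is_derive (fun s : R => Cmod (uh (x0 + sg * s)%R (t0 + s)%R - w s)%C ^ 2) s
    (2 * (fst (uh (x0 + sg * s)%R (t0 + s)%R - w s)%C *
            fst (RtoC sg * uh_x (x0 + sg * s)%R (t0 + s)%R + uh_t (x0 + sg * s)%R (t0 + s)%R - dw s)%C
        + snd (uh (x0 + sg * s)%R (t0 + s)%R - w s)%C *
            snd (RtoC sg * uh_x (x0 + sg * s)%R (t0 + s)%R + uh_t (x0 + sg * s)%R (t0 + s)%R - dw s)%C)).
Proof.
  intros Hs Ht Hx Hw.
  destruct (char_deriv uh uh_x uh_t x0 t0 sg s Hs Ht Hx) as [H1 H2].
  assert (W1 := is_derive_fst _ _ _ (Hw s)). assert (W2 := is_derive_snd _ _ _ (Hw s)).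
  apply F_deriv.
  - assert (D := is_derive_minus _ _ s _ _ H1 W1). unfold minus, plus, opp in D; simpl in D.
    replace (fst (RtoC sg * uh_x (x0 + sg * s)%R (t0 + s)%R + uh_t (x0 + sg * s)%R (t0 + s)%R - dw s)%C)
      with (fst (uh_x (x0 + sg * s)%R (t0 + s)%R) * sg + fst (uh_t (x0 + sg * s)%R (t0 + s)%R) + - fst (dw s))
      by (simpl; ring).
    eapply is_derive_ext; [|exact D]. intro x. simpl. ring.
  - assert (D := is_derive_minus _ _ s _ _ H2 W2). unfold minus, plus, opp in D; simpl in D.
    replace (snd (RtoC sg * uh_x (x0 + sg * s)%R (t0 + s)%R + uh_t (x0 + sg * s)%R (t0 + s)%R - dw s)%C)
      with (snd (uh_x (x0 + sg * s)%R (t0 + s)%R) * sg + snd (uh_t (x0 + sg * s)%R (t0 + s)%R) + - snd (dw s))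
      by (simpl; ring).
    eapply is_derive_ext; [|exact D]. intro x. simpl. ring.
Qed.
Theorem lemma4p4 :
  forall (m alpha beta : R), 0 <= m ->
  forall (c0 M0 M : R), 0 < c0 ->
  exists C4 C5 : R, 0 < C4 /\ 0 < C5 /\
  forall (T : R), 0 < T ->
  forall (uh vh uh_t uh_x vh_t vh_x : R -> R -> C),
    smooth2 uh -> smooth2 vh ->
    (forall x t, is_derive (fun s => uh x s) t (uh_t x t)) ->
    (forall x t, is_derive (fun y => uh y t) x (uh_x x t)) ->
    (forall x t, is_derive (fun s => vh x s) t (vh_t x t)) ->
    (forall x t, is_derive (fun y => vh y t) x (vh_x x t)) ->
    (forall x t, 0 <= t <= T ->
       (uh_t x t + uh_x x t)%C = NLu m alpha beta (uh x t) (vh x t) /\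
       (vh_t x t - vh_x x t)%C = NLv m alpha beta (uh x t) (vh x t)) ->
    is_lub (fun y => exists x t, 0 <= t <= T /\
              y = Cmod (uh x t) + Cmod (vh x t) + 1) M0 ->
    is_lub (fun y => exists x t, 0 <= t <= T /\
              y = Cmod (uh_t x t) + Cmod (uh_x x t)
                  + Cmod (vh_t x t) + Cmod (vh_x x t) + 1) M ->
  forall (tau : R), 0 < tau < 1 ->
  forall (u0 v0 : Z -> C) (u v : nat -> Z -> C) (U2 V2 : nat -> Z -> R -> C),
    (forall j, u 0%nat j = u0 j /\ v 0%nat j = v0 j) ->
    (forall n j, U2 n j 0 = u n (j - 1)%Z /\ V2 n j 0 = v n (j + 1)%Z) ->
    (forall n j s,
       is_derive (U2 n j) s (NLu m alpha beta (U2 n j s) (V2 n j s)) /\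
       is_derive (V2 n j) s (NLv m alpha beta (U2 n j s) (V2 n j s))) ->
    (forall n j, u (S n) j = U2 n j tau /\ v (S n) j = V2 n j tau) ->
    (forall N : nat,
       zsum (fun j => (Cmod (u0 j) ^ 2 + Cmod (v0 j) ^ 2) * tau) N <= c0) ->
  forall (j : Z) (n : nat), INR (S n) * tau <= T ->
    let Uc := fun s : R => (uh (IZR j * tau + s)%R (INR n * tau + s)%R
                        - U2 n (j + 1)%Z s)%C in
    let Vc := fun s : R => (vh (IZR (j + 2) * tau - s)%R (INR n * tau + s)%R
                        - V2 n (j + 1)%Z s)%C in
    let L0 := Cmod (Uc 0) ^ 2 + Cmod (Vc 0) ^ 2 in
    let D0 := Cmod (Uc 0) ^ 2 * Cmod (V2 n (j + 1)%Z 0) ^ 2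
              + Cmod (Vc 0) ^ 2 * Cmod (U2 n (j + 1)%Z 0) ^ 2 in
    Cmod (Uc tau) ^ 2 <= Cmod (Uc 0) ^ 2 + C4 * (L0 + D0) * tau + C5 * M ^ 2 * tau ^ 2 /\
    Cmod (Vc tau) ^ 2 <= Cmod (Vc 0) ^ 2 + C4 * (L0 + D0) * tau + C5 * M ^ 2 * tau ^ 2.
Proof.
  intros m al be Hm c0 M0 M Hc0.
  set (A := Acst m al be (Rabs M0)).
  assert (HA : 0 <= A).
  { unfold A, Acst. assert (h1 := Rabs_pos al). assert (h2 := Rabs_pos be). assert (h3 := Rabs_pos M0).
    assert (0 <= (Rabs al + 4 * Rabs be) * Rabs M0 ^ 2) by (apply Rmult_le_pos; [lra| apply pow2_ge_0]).
    assert (0 <= (Rabs al + 4 * Rabs be) * Rabs M0) by (apply Rmult_le_pos; lra). lra. }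
  destruct (chain A (8 * A) (8 * Rabs be) m c0 HA ltac:(lra) ltac:(assert (h := Rabs_pos be); lra) Hm Hc0)
    as (C4 & C5 & H4 & H5 & Hch).
  exists C4, C5. split; [exact H4|]. split; [exact H5|].
  intros T HT uh vh uh_t uh_x vh_t vh_x Hsu Hsv Hut Hux Hvt Hvx Hpde HM0 HM tau Htau
    u0 v0 u v U2 V2 Hinit H2init HODE Hnext Hsum j n Hn Uc Vc L0 D0.
  assert (Hcons : forall n' k s, 0 <= s ->
     Cmod (U2 n' k s) ^ 2 + Cmod (V2 n' k s) ^ 2 = Cmod (U2 n' k 0) ^ 2 + Cmod (V2 n' k 0) ^ 2).
  { intros n' k s Hs. apply (conservation m al be); auto. }
  assert (Hmass : forall n' j', (Cmod (u n' j') ^ 2 + Cmod (v n' (j' + 2)%Z) ^ 2) * tau <= c0).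
  { apply (mass_bound u v u0 v0 tau c0 Hinit); auto; [|lra].
    intros n' k. destruct (Hnext n' k) as [-> ->]. rewrite Hcons by lra.
    destruct (H2init n' k) as [-> ->]. auto. }
  assert (Hrange : forall s, 0 <= s <= tau -> 0 <= INR n * tau + s <= T).
  { intros s Hs. rewrite S_INR in Hn. assert (h := pos_INR n). split; nra. }
  assert (HbU : forall x t, 0 <= t <= T -> Cmod (uh x t) <= Rabs M0 /\ Cmod (vh x t) <= Rabs M0).
  { intros x t Ht. destruct HM0 as [Hub _].
    assert (h := Hub _ (ex_intro _ x (ex_intro _ t (conj Ht eq_refl)))).
    assert (h1 := Cmod_ge_0 (uh x t)). assert (h2 := Cmod_ge_0 (vh x t)). assert (h3 := Rle_abs M0).
    split; lra. }
  assert (HbD : forall x t, 0 <= t <= T -> Cmod (uh_x x t) <= M /\ Cmod (vh_x x t) <= M).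
  { intros x t Ht. destruct HM as [Hub _].
    assert (h := Hub _ (ex_intro _ x (ex_intro _ t (conj Ht eq_refl)))).
    assert (h1 := Cmod_ge_0 (uh_t x t)). assert (h2 := Cmod_ge_0 (uh_x x t)).
    assert (h3 := Cmod_ge_0 (vh_t x t)). assert (h4 := Cmod_ge_0 (vh_x x t)).
    split; lra. }
  set (F := fun s => Cmod (Uc s) ^ 2). set (G := fun s => Cmod (Vc s) ^ 2).
  set (P := fun s => Cmod (U2 n (j + 1)%Z s) ^ 2). set (Q := fun s => Cmod (V2 n (j + 1)%Z s) ^ 2).
  set (Xa := fun s => (uh_x (IZR j * tau + s)%R (INR n * tau + s)%R + uh_t (IZR j * tau + s)%R (INR n * tau + s)%R
                       - NLu m al be (U2 n (j + 1)%Z s) (V2 n (j + 1)%Z s))%C).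
  set (dF := fun s => 2 * (fst (Uc s) * fst (Xa s) + snd (Uc s) * snd (Xa s))).
  set (Xb := fun s => (RtoC (-1) * vh_x (IZR (j + 2) * tau - s)%R (INR n * tau + s)%R
                       + vh_t (IZR (j + 2) * tau - s)%R (INR n * tau + s)%R
                       - NLv m al be (U2 n (j + 1)%Z s) (V2 n (j + 1)%Z s))%C).
  set (dG := fun s => 2 * (fst (Vc s) * fst (Xb s) + snd (Vc s) * snd (Xb s))).
  set (dP := fun s => 2 * (fst (U2 n (j + 1)%Z s) * fst (NLu m al be (U2 n (j + 1)%Z s) (V2 n (j + 1)%Z s))
                         + snd (U2 n (j + 1)%Z s) * snd (NLu m al be (U2 n (j + 1)%Z s) (V2 n (j + 1)%Z s)))).
  set (dQ := fun s => 2 * (fst (V2 n (j + 1)%Z s) * fst (NLv m al be (U2 n (j + 1)%Z s) (V2 n (j + 1)%Z s))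
                         + snd (V2 n (j + 1)%Z s) * snd (NLv m al be (U2 n (j + 1)%Z s) (V2 n (j + 1)%Z s)))).
  assert (HdF : forall s, is_derive F s (dF s)).
  { intro s.
    assert (H := diff_deriv uh uh_x uh_t (IZR j * tau) (INR n * tau) 1 (U2 n (j + 1)%Z)
      (fun s => NLu m al be (U2 n (j + 1)%Z s) (V2 n (j + 1)%Z s)) s Hsu Hut Hux
      (fun s => proj1 (HODE n (j + 1)%Z s))).
    replace (IZR j * tau + 1 * s) with (IZR j * tau + s) in H by ring.
    rewrite Cmult_1_l in H.
    eapply is_derive_ext; [|exact H]. intro x. unfold F, Uc. rewrite Rmult_1_l. reflexivity. }
  assert (HdG : forall s, is_derive G s (dG s)).
  { intro s.
    assert (H := diff_deriv vh vh_x vh_t (IZR (j + 2) * tau) (INR n * tau) (-1) (V2 n (j + 1)%Z)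
      (fun s => NLv m al be (U2 n (j + 1)%Z s) (V2 n (j + 1)%Z s)) s Hsv Hvt Hvx
      (fun s => proj2 (HODE n (j + 1)%Z s))).
    replace (IZR (j + 2) * tau + -1 * s) with (IZR (j + 2) * tau - s) in H by ring.
    eapply is_derive_ext; [|exact H]. intro x. unfold G, Vc.
    replace (IZR (j + 2) * tau + -1 * x) with (IZR (j + 2) * tau - x) by ring. reflexivity. }
  assert (HdP : forall s, is_derive P s (dP s)).
  { intro s. apply nsq_deriv. apply HODE. }
  assert (HdQ : forall s, is_derive Q s (dQ s)).
  { intro s. apply nsq_deriv. apply HODE. }
  set (W := P 0 + Q 0).
  assert (HW : W * tau <= c0).
  { unfold W, P, Q. destruct (H2init n (j + 1)%Z) as [-> ->].
    replace (j + 1 - 1)%Z with j by lia. replace (j + 1 + 1)%Z with (j + 2)%Z by lia. apply Hmass. }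
  assert (Hpos : forall s, 0 <= s <= tau -> 0 <= F s /\ 0 <= G s /\ 0 <= P s /\ 0 <= Q s /\ P s + Q s = W).
  { intros s Hs. unfold F, G, P, Q, W. repeat split; try apply pow2_ge_0. apply Hcons. lra. }
  set (N := M ^ 2 * tau ^ 2).
  assert (HN : 0 <= N) by (unfold N; apply Rmult_le_pos; apply pow2_ge_0).
  assert (Hlip : forall (g dg : R -> R -> C) s, 0 <= s <= tau ->
     (forall x t, is_derive (fun y => g y t) x (dg x t)) ->
     (forall x t, 0 <= t <= T -> Cmod (dg x t) <= M) ->
     Cmod (g (IZR j * tau + s)%R (INR n * tau + s)%R - g (IZR (j + 2) * tau - s)%R (INR n * tau + s)%R)%C ^ 2
       <= 8 * N).
  { intros g dg s Hs Hd Hb.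
    assert (h := lip_C (fun y => g y (INR n * tau + s)) (fun y => dg y (INR n * tau + s)) M
      (IZR (j + 2) * tau - s) (IZR j * tau + s) (fun y => Hd y _) (fun y => Hb y _ (Hrange s Hs))).
    simpl in h. eapply Rle_trans; [exact h|]. rewrite plus_IZR. unfold N.
    replace (IZR j * tau + s - ((IZR j + IZR 2) * tau - s)) with (2 * (s - tau)) by (simpl; ring).
    assert (0 <= M ^ 2) by apply pow2_ge_0.
    assert ((2 * (s - tau)) ^ 2 <= 4 * tau ^ 2) by nra. nra. }
  assert (HiF : forall s, 0 <= s <= tau -> dF s <= A * (F s * Q s + F s + G s) + 8 * A * N).
  { intros s Hs. destruct (Hpde (IZR j * tau + s) (INR n * tau + s) (Hrange s Hs)) as [E1 _].
    assert (EX : Xa s = (NLu m al be (uh (IZR j * tau + s)%R (INR n * tau + s)%R) (vh (IZR j * tau + s)%R (INR n * tau + s)%R)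
                          - NLu m al be (U2 n (j + 1)%Z s) (V2 n (j + 1)%Z s))%C).
    { unfold Xa. rewrite <- E1. apply injective_projections; simpl; ring. }
    unfold dF. rewrite EX. unfold Uc.
    destruct (HbU (IZR j * tau + s) (INR n * tau + s) (Hrange s Hs)) as [b1 b2].
    eapply Rle_trans.
    { apply (deriv_bound m al be (Rabs M0) _ _ (vh (IZR (j + 2) * tau - s) (INR n * tau + s)) _ _ _ Hm b1 b2 (Rle_refl _)). }
    fold A. unfold F, G, Q, Uc, Vc.
    assert (he := Hlip vh vh_x s Hs Hvx (fun x t Ht => proj2 (HbD x t Ht))).
    assert (A * Cmod (vh (IZR j * tau + s)%R (INR n * tau + s)%R - vh (IZR (j + 2) * tau - s)%R (INR n * tau + s)%R)%C ^ 2 <= A * (8 * N))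
      by (apply Rmult_le_compat_l; auto).
    lra. }
  assert (HiG : forall s, 0 <= s <= tau -> dG s <= A * (G s * P s + F s + G s) + 8 * A * N).
  { intros s Hs. destruct (Hpde (IZR (j + 2) * tau - s) (INR n * tau + s) (Hrange s Hs)) as [_ E2].
    assert (EX : Xb s = (NLu m al be (vh (IZR (j + 2) * tau - s)%R (INR n * tau + s)%R) (uh (IZR (j + 2) * tau - s)%R (INR n * tau + s)%R)
                          - NLu m al be (V2 n (j + 1)%Z s) (U2 n (j + 1)%Z s))%C).
    { unfold Xb. rewrite <- !NLv_swap. rewrite <- E2. apply injective_projections; simpl; ring. }
    unfold dG. rewrite EX. unfold Vc.
    destruct (HbU (IZR (j + 2) * tau - s) (INR n * tau + s) (Hrange s Hs)) as [b1 b2].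
    eapply Rle_trans.
    { apply (deriv_bound m al be (Rabs M0) _ _ (uh (IZR j * tau + s) (INR n * tau + s)) _ _ _ Hm b2 b1 (Rle_refl _)). }
    fold A. unfold F, G, P, Uc, Vc.
    assert (he := Hlip uh uh_x s Hs Hux (fun x t Ht => proj1 (HbD x t Ht))).
    assert (Esym : forall z w : C, Cmod (z - w)%C = Cmod (w - z)%C).
    { intros z w. rewrite <- Cmod_opp. f_equal. apply injective_projections; simpl; ring. }
    rewrite Esym in he.
    assert (A * Cmod (uh (IZR (j + 2) * tau - s)%R (INR n * tau + s)%R - uh (IZR j * tau + s)%R (INR n * tau + s)%R)%C ^ 2 <= A * (8 * N))
      by (apply Rmult_le_compat_l; auto).
    lra. }
  assert (HiQ : forall s, 0 <= s <= tau -> dQ s <= Q s / tau + 8 * Rabs be * W * Q s + m ^ 2 * tau * W).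
  { intros s Hs. destruct (Hpos s Hs) as (a1 & a2 & a3 & a4 & a5).
    assert (h := q_bound m al be (U2 n (j + 1)%Z s) (V2 n (j + 1)%Z s) tau ltac:(lra) Hm).
    fold (Q s) (P s) in h. unfold dQ.
    assert (8 * Rabs be * P s * Q s <= 8 * Rabs be * W * Q s).
    { assert (h0 := Rabs_pos be). apply Rmult_le_compat_r; [lra|]. apply Rmult_le_compat_l; lra. }
    assert (m ^ 2 * tau * P s <= m ^ 2 * tau * W).
    { apply Rmult_le_compat_l; [apply Rmult_le_pos; [apply pow2_ge_0| lra]| lra]. }
    lra. }
  assert (HiP : forall s, 0 <= s <= tau -> dP s <= P s / tau + 8 * Rabs be * W * P s + m ^ 2 * tau * W).
  { intros s Hs. destruct (Hpos s Hs) as (a1 & a2 & a3 & a4 & a5).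
    assert (h := q_bound m al be (V2 n (j + 1)%Z s) (U2 n (j + 1)%Z s) tau ltac:(lra) Hm).
    rewrite NLv_swap in h.
    fold (Q s) (P s) in h. unfold dP.
    assert (8 * Rabs be * Q s * P s <= 8 * Rabs be * W * P s).
    { assert (h0 := Rabs_pos be). apply Rmult_le_compat_r; [lra|]. apply Rmult_le_compat_l; lra. }
    assert (m ^ 2 * tau * Q s <= m ^ 2 * tau * W).
    { apply Rmult_le_compat_l; [apply Rmult_le_pos; [apply pow2_ge_0| lra]| lra]. }
    lra. }
  split.
  - assert (R1 := Hch tau N F G P Q dF dG dQ W Htau HN HW HdF HdG HdQ Hpos HiF HiG HiQ).
    unfold L0, D0. unfold F, G, P, Q in R1. unfold N in R1. lra.
  - assert (Hpos' : forall s, 0 <= s <= tau -> 0 <= G s /\ 0 <= F s /\ 0 <= Q s /\ 0 <= P s /\ Q s + P s = W).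
    { intros s Hs. destruct (Hpos s Hs) as (a1 & a2 & a3 & a4 & a5). repeat split; lra. }
    assert (HiG' : forall s, 0 <= s <= tau -> dG s <= A * (G s * P s + G s + F s) + 8 * A * N).
    { intros s Hs. assert (h := HiG s Hs). lra. }
    assert (HiF' : forall s, 0 <= s <= tau -> dF s <= A * (F s * Q s + G s + F s) + 8 * A * N).
    { intros s Hs. assert (h := HiF s Hs). lra. }
    assert (R1 := Hch tau N G F Q P dG dF dP W Htau HN HW HdG HdF HdP Hpos' HiG' HiF' HiP).
    unfold L0, D0. unfold F, G, P, Q in R1. unfold N in R1. lra.
Qed.
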